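(* Let $q\in(0,1)$, a fixed partition $\mathcal N=\mathcal H_0\sqcup\mathcal H_1$, and $p\in[0,1]^N$ be given. For each $i\in\mathcal L\cup\mathcal R\cup\{\tilde k\}$ let $$\mathrm{FDP}_i:=\max_{p'\in[0,1]^N:\ \|p-p'\|_0\le1,\ \tilde k(p')=i}\mathrm{FDP}[BH_q;p'].$$ Then $$\max_{p'\in[0,1]^N:\ \|p-p'\|_0\le1}\mathrm{FDP}[BH_q;p']=\max_{i\in\mathcal L\cup\mathcal R\cup\{\tilde k\}}\mathrm{FDP}_i.$$
   Context: $\mathcal N=\{1,\dots,N\}$. For $x\in[0,1]^N$, $B^{\mathcal N}_{1:i}(x)=|\{j\in\mathcal N:0\le x_j<iq/N\}|$ ($B^{\mathcal N}_{1:0}=0$), $\tilde k(x)=\max\{i\in\{0,\dots,N\}:B^{\mathcal N}_{1:i}(x)=i\}$; the Benjamini–Hochberg procedure $BH_q$ rejects tests $j$ with $x_j<\tilde k(x)q/N$, and $\mathrm{FDP}[BH_q;x]=|\{j\in\mathcal H_0:x_j<\tilde k(x)q/N\}|/\max(\tilde k(x),1)$. Write $\tilde k=\tilde k(p)$, $B^{\mathcal N}_{1:i}=B^{\mathcal N}_{1:i}(p)$. $\|p-p'\|_0$ is the number of differing coordinates. $\mathcal L:=\{i\in\{\tilde k+1,\dots,N\}:B^{\mathcal N}_{1:i}=i-1\}$. $i^*:=\max(0,\max\{i\in\{1,\dots,\tilde k-1\}:B^{\mathcal N}_{1:i}=i+1\})$ (inner maximum omitted if empty), and $\mathcal R:=\{i\in\{i^*+1,\dots,\tilde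 k-1\}:B^{\mathcal N}_{1:i}=i\}\cup\{i^*\}$. *)

(* Defs.v *)
From mathcomp Require Import all_boot all_order all_algebra.
From mathcomp Require Import reals.
Set Implicit Arguments. Unset Strict Implicit. Unset Printing Implicit Defensive.
Import Order.TTheory GRing.Theory Num.Theory.
Local Open Scope ring_scope.

(* Tests are indexed by 'I_N (test j : 'I_N corresponds to test j+1 of the paper). *)
Section BH.
Variables (R : realType) (N : nat) (q : R).

Definition Bcount (x : 'I_N -> R) (i : nat) : nat :=
  #|[pred j : 'I_N | (0 <= x j) && (x j < i%:R * q / N%:R)]|.

Definition ktilde (x : 'I_N -> R) : nat :=
  \max_(i < N.+1 | Bcount x i == i) (i : nat).

Definition FDP (H0 : {set 'I_N}) (x : 'I_N -> R) : R :=
  (#|[pred j in H0 | x j < (ktilde x)%:R * q / N%:R]|)%:R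
    / (maxn (ktilde x) 1)%:R.

Definition dist0 (x y : 'I_N -> R) : nat := #|[pred j : 'I_N | x j != y j]|.

Definition in01 (x : 'I_N -> R) : Prop := forall j, 0 <= x j <= 1.

Definition Lset (p : 'I_N -> R) : seq nat :=
  [seq i <- iota (ktilde p).+1 (N - ktilde p) | Bcount p i == i.-1].

Definition istar (p : 'I_N -> R) : nat :=
  \max_(1 <= i < ktilde p | Bcount p i == i.+1) i.

Definition Rset (p : 'I_N -> R) : seq nat :=
  istar p :: [seq i <- iota (istar p).+1 ((ktilde p).-1 - istar p) | Bcount p i == i].

End BH.

Definition IsMax {R : realType} (P : R -> Prop) (m : R) : Prop :=
  P m /\ forall x, P x -> x <= m.

(* Main.v *)
Require Import Defs.
From mathcomp Require Import all_boot all_order all_algebra.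
From mathcomp Require Import reals.
From mathcomp Require Import zify.
From Stdlib Require Import Classical ClassicalEpsilon.
Import Order.TTheory GRing.Theory Num.Theory.
Local Open Scope ring_scope.

Section Aux.
Variables (R : realType) (N : nat) (q : R).
Hypothesis hq0 : 0 < q.
Hypothesis hq1 : q < 1.

Local Notation t m := ((m)%:R * q / N%:R).
Local Notation B x := (@Bcount R N q x).

Lemma t_mono m n : (m <= n)%N -> t m <= t n.
Proof.
move=> h; apply: ler_wpM2r; first by rewrite invr_ge0 ler0n.
by apply: ler_wpM2r; [exact: ltW | rewrite ler_nat].
Qed.

Lemma t0 : t 0 = 0.
Proof. by rewrite !mul0r. Qed.

Lemma tN : (0 < N)%N -> t N = q.
Proof.
move=> hN; rewrite mulrAC divff ?mul1r //.
by rewrite pnatr_eq0 -lt0n.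
Qed.

Lemma t_le_q m : (0 < N)%N -> (m <= N)%N -> t m <= q.
Proof. by move=> hN hm; have := t_mono _ _ hm; rewrite tN. Qed.

Lemma t_pos m : (0 < N)%N -> (0 < m)%N -> 0 < t m.
Proof.
move=> hN hm; rewrite divr_gt0 ?ltr0n // mulr_gt0 // ltr0n //.
Qed.

Lemma B_mono x m n : (m <= n)%N -> (B x m <= B x n)%N.
Proof.
move=> h; apply: subset_leq_card; apply/subsetP => j; rewrite !inE.
case/andP => -> /= h2; apply: (lt_le_trans h2); exact: t_mono.
Qed.

Lemma B0 x : B x 0 = 0%N.
Proof.
apply: eq_card0 => j; rewrite !inE t0.
by apply/negP; case/andP => h1 h2; move: (le_lt_trans h1 h2); rewrite ltxx.
Qed.

Lemma B_leN x m : (B x m <= N)%N.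
Proof. by rewrite -{2}(card_ord N); apply: max_card. Qed.

Lemma kt_spec x : (ktilde q x <= N)%N /\ B x (ktilde q x) = ktilde q x.
Proof.
rewrite /ktilde; apply: (big_ind (fun k => (k <= N)%N /\ B x k = k)).
- by split=> //; rewrite B0.
- by move=> a b ha hb; case: (leqP a b) => h; rewrite ?(maxn_idPr h) ?(maxn_idPl (ltnW h)).
- move=> i /eqP hi; split=> //; rewrite -ltnS; exact: ltn_ord.
Qed.

Lemma kt_max x i : (i <= N)%N -> B x i = i -> (i <= ktilde q x)%N.
Proof.
move=> hi hB; rewrite /ktilde.
have hi' : (i < N.+1)%N by [].
have := leq_bigmax_cond (P := fun i : 'I_N.+1 => B x i == i) (F := fun i : 'I_N.+1 => (i:nat)) (Ordinal hi').
by apply; rewrite /= hB.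
Qed.

Lemma cross (g : nat -> nat) (s a b : nat) : (forall m, g m <= g m.+1)%N ->
  (a <= b)%N -> (a + s < g a)%N -> (g b <= b + s)%N ->
  exists m, (a < m <= b)%N /\ g m = (m + s)%N.
Proof.
move=> hg; elim: b => [|b IH] hab ha hb.
  have a0 : a = 0%N by lia.
  by subst; lia.
case: (ltnP b a) => hba.
  have ab : a = b.+1 by lia.
  by subst; lia.
case: (leqP (g b) (b + s)) => h.
  have [m [hm1 hm2]] := IH hba ha h.
  by exists m; split=> //; lia.
by exists b.+1; split; [lia | have := hg b; lia].
Qed.

Lemma Bmono1 x : forall m, (B x m <= B x m.+1)%N.
Proof. by move=> m; apply: B_mono. Qed.

Lemma kt_tail x m : (ktilde q x < m <= N)%N -> (B x m < m)%N.
Proof.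
move=> /andP[h1 h2]; rewrite ltnNge; apply/negP => h.
case: (ltngtP (B x m) m) => h3.
- by move: h; rewrite leqNgt h3.
- have h4 : (m + 0 < B x m)%N by rewrite addn0.
  have h5 : (B x N <= N + 0)%N by rewrite addn0; exact: B_leN.
  have [m' [hm1 hm2]] := cross (fun m => B x m) 0 m N (Bmono1 x) h2 h4 h5.
  rewrite addn0 in hm2.
  have hm' : (m' <= N)%N by lia.
  by have := kt_max x m' hm' hm2; lia.
- by have := kt_max x m h2 h3; lia.
Qed.

Lemma kt_char x i : (i <= N)%N -> B x i = i ->
  (forall m, (i < m <= N)%N -> B x m != m) -> ktilde q x = i.
Proof.
move=> hi hB hm; have [h1 h2] := kt_spec x; have := kt_max x i hi hB.
rewrite leq_eqVlt => /orP[/eqP //|hlt].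
by have := hm _ (introT andP (conj hlt h1)); rewrite h2 eqxx.
Qed.

Lemma is_spec x : istar q x = 0%N \/
  ((1 <= istar q x < ktilde q x)%N /\ B x (istar q x) = (istar q x).+1).
Proof.
rewrite /istar big_seq_cond.
apply: (big_ind (fun s => s = 0%N \/ ((1 <= s < ktilde q x)%N /\ B x s = s.+1))).
- by left.
- by move=> a b ha hb; case: (leqP a b) => h; rewrite ?(maxn_idPr h) ?(maxn_idPl (ltnW h)).
- by move=> i /andP[]; rewrite mem_index_iota => hi /eqP hB; right.
Qed.

Lemma is_max x i : (1 <= i < ktilde q x)%N -> B x i = i.+1 -> (i <= istar q x)%N.
Proof.
move=> hi hB; rewrite /istar.
by apply: (leq_bigmax_seq (F := id)); [rewrite mem_index_iota | rewrite /= hB].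
Qed.

Lemma Rbound x m : (istar q x < m <= N)%N -> (B x m <= m)%N.
Proof.
move=> /andP[hs hm]; have [k1 k2] := kt_spec x.
case: (ltngtP m (ktilde q x)) => h.
- rewrite leqNgt; apply/negP => hB.
  case: (eqVneq (B x m) m.+1) => hB1.
    have e1 : (1 <= m < ktilde q x)%N by lia.
    by have := is_max x m e1 hB1; lia.
  have h2 : (m + 1 < B x m)%N by lia.
  have h5 : (B x (ktilde q x) <= ktilde q x + 1)%N by rewrite k2; lia.
  have [m' [hm1 hm2]] := cross (fun m => B x m) 1 m (ktilde q x) (Bmono1 x) (ltnW h) h2 h5.
  case: (ltngtP m' (ktilde q x)) => h'.
  + have e1 : (1 <= m' < ktilde q x)%N by lia.
    have e2 : B x m' = m'.+1 by rewrite hm2 addn1.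
    have := is_max x m' e1 e2; lia.
  + lia.
  + by subst; rewrite k2 in hm2; lia.
- by apply: ltnW; apply: kt_tail; rewrite h.
- by rewrite h k2.
Qed.

Lemma cardD1_eq (T : finType) (A A' : pred T) j :
  (forall j', j' != j -> A j' = A' j') -> (#|A| + A' j = #|A'| + A j)%N.
Proof.
move=> h; rewrite (cardD1 j A) (cardD1 j A').
have -> : #|[predD1 A & j]| = #|[predD1 A' & j]|.
  by apply: eq_card => j'; rewrite !inE; case: eqP => //= /eqP ne; rewrite !unfold_in h.
rewrite !unfold_in; case: (A j); case: (A' j); lia.
Qed.

Lemma Bswap x y j m : (forall j', j' != j -> x j' = y j') ->
  B x m + nat_of_bool ((0 <= y j) && (y j < t m))%R =
  B y m + nat_of_bool ((0 <= x j) && (x j < t m))%R :> nat.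
Proof.
move=> h.
apply: (@cardD1_eq _ (fun j' => (0 <= x j') && (x j' < t m))
   (fun j' => (0 <= y j') && (y j' < t m)) j _).
by move=> j' ne; rewrite h.
Qed.

Lemma one_diff (x y : 'I_N -> R) : (dist0 x y <= 1)%N ->
  (forall j, x j = y j) \/ exists j, forall j', j' != j -> x j' = y j'.
Proof.
move=> hd; case: (pickP [pred j | x j != y j]) => [j hj|none].
  right; exists j => j' ne; apply/eqP; apply: contraNT ne => h'.
  move: hd => /card_le1_eqP H.
  have := H j' j; rewrite !inE => /(_ h' hj) ->; exact: eqxx.
by left => j; have := none j; rewrite /= => /negbFE /eqP.
Qed.

Lemma kt_ext (x y : 'I_N -> R) : (forall j, x j = y j) -> ktilde q x = ktilde q y.
Proof.
move=> h; rewrite /ktilde; apply: eq_bigl => i; rewrite /Bcount.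
by congr (_ == _); apply: eq_card => j; rewrite !inE h.
Qed.

Lemma Rmem x k' : (k' < ktilde q x)%N -> (B x k' = k' \/ B x k' = k'.+1) ->
  (forall m, (k' < m < ktilde q x)%N -> (B x m <= m)%N) -> k' \in Rset q x.
Proof.
move=> hk hB hm; have [k1 k2] := kt_spec x.
have hs : (istar q x <= k')%N.
  case: (is_spec x) => [->//|[hs1 hs2]].
  rewrite leqNgt; apply/negP => hlt.
  have e : (k' < istar q x < ktilde q x)%N by lia.
  by have := hm _ e; rewrite hs2; lia.
rewrite /Rset in_cons.
case: hB => hB.
  case: (eqVneq k' (istar q x)) => [e0|ne]; first by apply/orP; left; apply/eqP.
  by rewrite /= mem_filter mem_iota hB eqxx /=; lia.
have k'1 : (1 <= k')%N.
  rewrite lt0n; apply/negP => /eqP e; by rewrite e B0 in hB.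
have e : (1 <= k' < ktilde q x)%N by lia.
have := is_max x k' e hB => h2.
have e0 : k' = istar q x by lia.
by apply/orP; left; apply/eqP.
Qed.

Lemma IdxA (p p' : 'I_N -> R) : in01 p -> in01 p' -> (dist0 p p' <= 1)%N ->
  (ktilde q p' \in Lset q p) || (ktilde q p' \in Rset q p) || (ktilde q p' == ktilde q p).
Proof.
move=> hp hp' hd; case: (one_diff _ _ hd) => [he|[j hj]].
  by rewrite -(kt_ext _ _ he) eqxx orbT.
have [k1 k2] := kt_spec p; have [k1' k2'] := kt_spec p'.
have sw := fun m => Bswap p p' j m hj.
case/andP: (hp j) => hpj0 _; case/andP: (hp' j) => hp'j0 _.
rewrite hpj0 hp'j0 /= in sw.
case: (ltngtP (ktilde q p) (ktilde q p')) => hkk.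
- apply/orP; left; apply/orP; left.
  rewrite mem_filter mem_iota.
  have e : (ktilde q p < ktilde q p' <= N)%N by lia.
  have := kt_tail _ _ e; have := sw (ktilde q p'); rewrite k2'.
  move: (p j < _) (p' j < _) => [] [] /= h1 h2; apply/andP; split; try (apply/eqP); lia.
- apply/orP; left; apply/orP; right.
  have e : (ktilde q p' < ktilde q p <= N)%N by lia.
  have tl := kt_tail _ _ e.
  have := sw (ktilde q p); rewrite k2.
  case: (boolP (p' j < _)) => hb'; case: (boolP (p j < _)) => hb /=; try lia.
  move=> _.
  have hb'm m : (m <= ktilde q p)%N -> (p' j < t m) = false.
    move=> hm; apply/negbTE; rewrite -leNgt; apply: le_trans (t_mono _ _ hm) _.
    by rewrite leNgt.
  apply: Rmem => //.
    have := sw (ktilde q p'); rewrite k2' hb'm; last by lia.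
    case: (p j < _) => /= h; lia.
  move=> m /andP[hm1 hm2].
  have e2 : (ktilde q p' < m <= N)%N by lia.
  have := kt_tail _ _ e2; have := sw m; rewrite hb'm; last by lia.
  case: (p j < _) => /= h; lia.
- by apply/orP; right; apply/eqP.
Qed.

Definition upd (x : 'I_N -> R) j v := fun j' => if j' == j then v else x j'.

Lemma upd_diff x j v : forall j', j' != j -> x j' = upd x j v j'.
Proof. by move=> j' ne; rewrite /upd (negbTE ne). Qed.

Lemma upd_j x j v : upd x j v j = v.
Proof. by rewrite /upd eqxx. Qed.

Lemma upd_dist x j v : (dist0 x (upd x j v) <= 1)%N.
Proof.
apply/card_le1_eqP => a b; rewrite !inE /upd.
case: (eqVneq a j) => [->|na]; case: (eqVneq b j) => [->|nb] //=; by rewrite ?eqxx.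
Qed.

Lemma upd_01 x j v : in01 x -> 0 <= v <= 1 -> in01 (upd x j v).
Proof. by move=> h hv j'; rewrite /upd; case: eqP. Qed.

Lemma dist0_refl (x : 'I_N -> R) : dist0 x x = 0%N.
Proof. by apply: eq_card0 => j; rewrite inE eqxx. Qed.

Lemma exmin (C : pred 'I_N) (f : 'I_N -> R) j0 : C j0 ->
  exists j, C j /\ forall j', C j' -> f j <= f j'.
Proof.
move=> h; case: (arg_minP f h) => j hj hmin; exists j; split=> // j' hj'.
Qed.

Lemma minsub x i j m : (forall j', ~~ (x j' < t i) -> x j <= x j') ->
  t m <= x j -> (B x m <= B x i)%N.
Proof.
move=> hmin hm; apply: subset_leq_card; apply/subsetP => j'; rewrite !inE.
case/andP => h0 h1; rewrite h0 /=; apply: contraT => hn.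
have hle := hmin _ hn.
by rewrite ltNge (le_trans hm hle) in h1.
Qed.

Lemma ex_ge x i : in01 x -> (B x i < N)%N -> exists j, ~~ (x j < t i).
Proof.
move=> hx hB; case: (pickP [pred j | ~~ (x j < t i)]) => [j hj|none].
  by exists j.
exfalso; suff : B x i = N by lia.
rewrite /Bcount -[RHS](size_enum_ord N); apply: eq_cardT => j; rewrite !inE.
have := none j; rewrite /= => /negbFE ->; rewrite andbT.
by case/andP: (hx j).
Qed.

Lemma ex_lt x i : (0 < B x i)%N -> exists j, (0 <= x j) && (x j < t i).
Proof.
move=> hB; case: (pickP [pred j | (0 <= x j) && (x j < t i)]) => [j hj|none].
  by exists j.
by exfalso; move: hB; rewrite /Bcount eq_card0.
Qed.

Lemma one_lt_t m : (0 < N)%N -> (m <= N)%N -> (1 < t m) = false.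
Proof.
move=> hN hm; apply/negbTE; rewrite -leNgt.
exact: le_trans (t_le_q _ hN hm) (ltW hq1).
Qed.

Lemma attL (x : 'I_N -> R) i : in01 x -> i \in Lset q x ->
  exists y : 'I_N -> R, in01 y /\ (dist0 x y <= 1)%N /\ ktilde q y = i.
Proof.
move=> hx; rewrite mem_filter mem_iota => /andP[/eqP hB /andP[hi1 hi2]].
have [k1 k2] := kt_spec x.
have hiN : (i <= N)%N by lia.
have hN : (0 < N)%N by lia.
have i1 : (0 < i)%N by lia.
have hBN : (B x i < N)%N by lia.
have [j0 hj0] := ex_ge _ _ hx hBN.
have [j [hj hmin]] := exmin (fun j => ~~ (x j < t i)) x _ hj0.
exists (upd x j 0); split; first by apply: upd_01 => //; rewrite lexx ler01.
split; first exact: upd_dist.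
have hd := upd_diff x j 0.
case/andP: (hx j) => hx0 _.
apply: kt_char => //.
  have := Bswap _ _ _ i hd; rewrite upd_j lexx /= (t_pos _ hN i1) (negbTE hj) andbF hB.
  lia.
move=> m /andP[hm1 hm2]; have m0 : (0 < m)%N by lia.
have := Bswap _ _ _ m hd; rewrite upd_j lexx /= (t_pos _ hN m0) hx0 /=.
case: (boolP (x j < t m)) => hjm /=.
  have e : (ktilde q x < m <= N)%N by lia.
  have := kt_tail _ _ e; move=> h1 h2; apply/eqP; lia.
have hle : t m <= x j by rewrite leNgt.
have := minsub _ _ _ m hmin hle.
rewrite hB => h1 h2; apply/eqP; lia.
Qed.

Lemma attR1 (x : 'I_N -> R) : in01 x -> (1 <= istar q x)%N ->
  exists y : 'I_N -> R, in01 y /\ (dist0 x y <= 1)%N /\ ktilde q y = istar q x.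
Proof.
move=> hx hs; have [s0|[hs1 hs2]] := is_spec x; first by rewrite s0 in hs.
have [k1 k2] := kt_spec x.
have hN : (0 < N)%N by lia.
have hB1 : (0 < B x (istar q x))%N by rewrite hs2.
have [j hj] := ex_lt _ _ hB1.
exists (upd x j 1); split; first by apply: upd_01 => //; rewrite ler01 lexx.
split; first exact: upd_dist.
have hd := upd_diff x j 1.
case/andP: hj => hx0 hj.
apply: kt_char => //; first by lia.
  have := Bswap _ _ _ (istar q x) hd; rewrite upd_j ler01 one_lt_t //; last by lia.
  by rewrite hx0 hj hs2 /=; lia.
move=> m /andP[hm1 hm2].
have := Bswap _ _ _ m hd; rewrite upd_j ler01 one_lt_t // hx0 /=.
have -> : x j < t m by apply: lt_le_trans hj (t_mono _ _ (ltnW hm1)).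
have := Rbound x m (introT andP (conj hm1 hm2)).
move=> h1 h2 /=; apply/eqP; lia.
Qed.

Lemma attR2 (x : 'I_N -> R) i : in01 x -> (istar q x <= i < ktilde q x)%N -> B x i = i ->
  exists y : 'I_N -> R, in01 y /\ (dist0 x y <= 1)%N /\ ktilde q y = i.
Proof.
move=> hx /andP[hi1 hi2] hB; have [k1 k2] := kt_spec x.
have hN : (0 < N)%N by lia.
have hBN : (B x i < N)%N by lia.
have [j0 hj0] := ex_ge _ _ hx hBN.
have [j [hj hmin]] := exmin (fun j => ~~ (x j < t i)) x _ hj0.
exists (upd x j 1); split; first by apply: upd_01 => //; rewrite ler01 lexx.
split; first exact: upd_dist.
have hd := upd_diff x j 1.
case/andP: (hx j) => hx0 _.
apply: kt_char => //; first by lia.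
  have := Bswap _ _ _ i hd; rewrite upd_j ler01 one_lt_t //; last by lia.
  by rewrite (negbTE hj) andbF hB /=; lia.
move=> m /andP[hm1 hm2].
have := Bswap _ _ _ m hd; rewrite upd_j ler01 one_lt_t // hx0 /=.
case: (boolP (x j < t m)) => hjm /=.
  have e : (istar q x < m <= N)%N by lia.
  have := Rbound x m e; move=> h1 h2; apply/eqP; lia.
have hle : t m <= x j by rewrite leNgt.
have := minsub _ _ _ m hmin hle.
rewrite hB => h1 h2; apply/eqP; lia.
Qed.

Lemma attR (x : 'I_N -> R) i : in01 x -> i \in Rset q x ->
  exists y : 'I_N -> R, in01 y /\ (dist0 x y <= 1)%N /\ ktilde q y = i.
Proof.
move=> hx; rewrite in_cons => /orP[/eqP ->|].
  case: (is_spec x) => [s0|[hs1 hs2]]; last by apply: attR1 => //; case/andP: hs1.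
  rewrite s0; case: (posnP (ktilde q x)) => hk.
    by exists x; split=> //; split; [rewrite dist0_refl | rewrite hk].
  apply: attR2 => //; last exact: B0.
  by rewrite s0 hk.
rewrite mem_filter mem_iota => /andP[/eqP hB /andP[h1 h2]].
apply: attR2 => //; apply/andP; split; lia.
Qed.
End Aux.

Lemma finmax (R : realType) (s : seq R) (P : R -> Prop) :
  (exists x, P x) -> (forall x, P x -> x \in s) -> exists m, IsMax P m.
Proof.
elim: s P => [|a s IH] P [x Px] hs; first by have := hs x Px.
case: (classic (exists y, P y /\ y != a)) => [[y [Py ya]]|none].
  have hs' : forall z, P z /\ z != a -> z \in s.
    by move=> z [Pz za]; have := hs z Pz; rewrite in_cons (negbTE za).
  have [m [[Pm ma] hm]] := IH (fun y => P y /\ y != a) (ex_intro _ y (conj Py ya)) hs'.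
  case: (classic (P a)) => Pa.
    case: (leP a m) => h.
      exists m; split=> // z Pz; case: (eqVneq z a) => [->//|za].
      exact: hm.
    exists a; split=> // z Pz; case: (eqVneq z a) => [->//|za].
    exact: le_trans (hm z (conj Pz za)) (ltW h).
  exists m; split=> // z Pz; case: (eqVneq z a) => [e|za].
    by rewrite e in Pz.
  exact: hm.
have ea : forall z, P z -> z = a.
  by move=> z Pz; apply/eqP; apply: contraT => za; exfalso; apply: none; exists z.
exists a; split; first by rewrite -(ea x Px).
by move=> z Pz; rewrite (ea z Pz).
Qed.

Theorem theorem5 (R : realType) (N : nat) (q : R) (H0 : {set 'I_N})
    (p : 'I_N -> R) :
  0 < q < 1 -> in01 p ->
  let Idx := fun i : nat =>
    (i \in Lset q p) || (i \in Rset q p) || (i == ktilde q p) in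
  exists (M : R) (FDPi : nat -> R),
    IsMax (fun v => exists p', in01 p' /\ (dist0 p p' <= 1)%N /\ v = FDP q H0 p') M
    /\ (forall i, Idx i ->
          IsMax (fun v => exists p', in01 p' /\ (dist0 p p' <= 1)%N /\
                            ktilde q p' = i /\ v = FDP q H0 p') (FDPi i))
    /\ IsMax (fun v => exists i, Idx i /\ v = FDPi i) M.
Proof.
move=> /andP[hq0 hq1] hp Idx.
have hA : forall p' : 'I_N -> R, in01 p' -> (dist0 p p' <= 1)%N -> Idx (ktilde q p').
  by move=> p' hp' hd; exact: IdxA.
have hB : forall i, Idx i -> exists p' : 'I_N -> R,
    in01 p' /\ (dist0 p p' <= 1)%N /\ ktilde q p' = i.
  move=> i; rewrite /Idx => /orP[/orP[hL|hR]|/eqP ->].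
  - exact: attL.
  - exact: attR.
  - by exists p; split=> //; split; [rewrite dist0_refl | ].
pose vals := [seq (a%:R / b%:R : R) | a <- iota 0 N.+1, b <- iota 0 N.+2].
have hv : forall p' : 'I_N -> R, FDP q H0 p' \in vals.
  move=> p'; rewrite /FDP; apply: (allpairs_f (fun a b : nat => (a%:R / b%:R : R))); rewrite mem_iota /=.
    by rewrite ltnS; apply: leq_trans (max_card _) _; rewrite card_ord.
  have [k1 _] := @kt_spec R N q p'.
  by rewrite add0n; lia.
have hFi : forall i, exists m, Idx i ->
    IsMax (fun v => exists p', in01 p' /\ (dist0 p p' <= 1)%N /\
                            ktilde q p' = i /\ v = FDP q H0 p') m.
  move=> i; case hI: (Idx i); last by exists 0.
  have [p' [h1 [h2 h3]]] := hB i hI.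
  have [m hm] := @finmax R vals
    (fun v => exists p', in01 p' /\ (dist0 p p' <= 1)%N /\
                            ktilde q p' = i /\ v = FDP q H0 p')
    (ex_intro _ (FDP q H0 p') (ex_intro _ p' (conj h1 (conj h2 (conj h3 erefl)))))
    (fun v hv' => match hv' with ex_intro p'' (conj _ (conj _ (conj _ e))) =>
        eq_ind_r (fun w => w \in vals) (hv p'') e end).
  by exists m.
pose FDPi := fun i => proj1_sig (constructive_indefinite_description _ (hFi i)).
have hFDPi : forall i, Idx i -> IsMax (fun v => exists p', in01 p' /\ (dist0 p p' <= 1)%N /\
                            ktilde q p' = i /\ v = FDP q H0 p') (FDPi i).
  by move=> i hi; exact: (proj2_sig (constructive_indefinite_description _ (hFi i)) hi).
have hd0 : (dist0 p p <= 1)%N by rewrite dist0_refl.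
have [M hM] := @finmax R vals
    (fun v => exists p', in01 p' /\ (dist0 p p' <= 1)%N /\ v = FDP q H0 p')
    (ex_intro _ (FDP q H0 p) (ex_intro _ p (conj hp (conj hd0 erefl))))
    (fun v hv' => match hv' with ex_intro p'' (conj _ (conj _ e)) =>
        eq_ind_r (fun w => w \in vals) (hv p'') e end).
exists M, FDPi; split=> //; split=> //.
split.
  case: hM => [[p' [h1 [h2 ->]]] hMb].
  have hi := hA p' h1 h2.
  exists (ktilde q p'); split=> //.
  have [[p'' [g1 [g2 [g3 ->]]]] hb] := hFDPi _ hi.
  apply/eqP; rewrite eq_le; apply/andP; split.
    by apply: hb; exists p'.
  by apply: hMb; exists p''.
move=> v [i [hi ->]].
have [[p'' [g1 [g2 [g3 ->]]]] _] := hFDPi _ hi.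
by apply: hM.2; exists p''.
Qed.
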